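(* Let $k$ be a positive integer, $\mathbb{S}=\mathbb{R}/2\pi\mathbb{Z}$, and for $t\in\mathbb{S}$ let $$U_k(t)=\bigl(\cos t,\ \sin t,\ \cos 3t,\ \sin 3t,\ \ldots,\ \cos(2k-1)t,\ \sin(2k-1)t\bigr)\in\mathbb{R}^{2k}.$$ Let $t_1,\ldots,t_{2k}\in\mathbb{S}$ be distinct points no two of which are antipodal (i.e. $t_i\neq t_j+\pi \pmod{2\pi}$ for all $i,j$). Then the vectors $U_k(t_1),\ldots,U_k(t_{2k})$ are linearly independent. *)

(* Defs.v *)
From HB Require Import structures.
From mathcomp Require Import all_boot all_order all_algebra.
From mathcomp Require Import all_classical all_reals all_analysis.
Set Implicit Arguments. Unset Strict Implicit. Unset Printing Implicit Defensive.
Import Order.TTheory GRing.Theory Num.Theory.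
Local Open Scope ring_scope.

(* U_k(t) = (cos t, sin t, cos 3t, sin 3t, ..., cos (2k-1)t, sin (2k-1)t).
   Coordinate j (0-based): j = 2m -> cos((2m+1) t), j = 2m+1 -> sin((2m+1) t). *)
Definition Uk (R : realType) (k : nat) (t : R) : 'rV[R]_(k.*2) :=
  \row_(j < k.*2)
    (if odd j then sin (((j./2).*2.+1)%:R * t) else cos (((j./2).*2.+1)%:R * t)).

Definition Umat (R : realType) (k : nat) (t : 'I_(k.*2) -> R) : 'M[R]_(k.*2) :=
  \matrix_(i < k.*2) Uk k (t i).

Definition eq_mod2pi (R : realType) (x y : R) : Prop :=
  exists m : int, x - y = m%:~R * (2 * pi).

(* Main.v *)
Require Import Defs.
From HB Require Import structures.
From mathcomp Require Import all_boot all_order all_algebra.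
From mathcomp Require Import all_classical all_reals all_analysis.
From mathcomp Require Import complex zify ring lra.
Import Order.TTheory GRing.Theory Num.Theory.
Local Open Scope ring_scope.

Section Aux.
Variable R : realType.

Lemma perZ (f : R -> R) : (forall x, f (x + 2 * pi) = f x) ->
  forall (m : int) x, f (x + m%:~R * (2 * pi)) = f x.
Proof.
move=> hf.
have hn : forall (n : nat) x, f (x + n%:R * (2 * pi)) = f x.
  elim=> [|n IH] x; first by rewrite mul0r addr0.
  by rewrite -[n.+1]addn1 natrD mulrDl mul1r addrA hf IH.
case=> n x; first by rewrite -pmulrn hn.
rewrite NegzE mulrNz -pmulrn mulNr.
by rewrite -{2}[x](subrK ((n.+1)%:R * (2 * pi))) hn.
Qed.

Lemma trig1 (x : R) : cos x = 1 -> sin x = 0 -> exists m : int, x = m%:~R * (2 * pi).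
Proof.
move=> hc hs.
have pi0 : 0 < pi :> R by exact: pi_gt0.
have T0 : 0 < 2 * pi :> R by rewrite mulr_gt0.
set m := Num.floor (x / (2 * pi)).
exists m.
set r := x - m%:~R * (2 * pi).
have hxr : x = r + m%:~R * (2 * pi) by rewrite /r subrK.
have hcr : cos r = 1 by rewrite -hc hxr perZ // => y; rewrite mulr_natl cosD2pi.
have hsr : sin r = 0 by rewrite -hs hxr perZ // => y; rewrite mulr_natl sinD2pi.
have /andP[h1 h2] := floor_itv (x / (2 * pi)).
have r0 : 0 <= r.
  by rewrite /r subr_ge0 -ler_pdivlMr.
have r2 : r < 2 * pi.
  move: h2; rewrite ltr_pdivrMr // intrD mulrDl mul1r /r => h2; lra.
suff r00 : r = 0 by rewrite hxr r00 add0r.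
case: (lerP r pi) => hrp.
  apply: (@cos_inj R); rewrite ?cos0 //; rewrite in_itv /= ?r0 ?hrp //.
  by rewrite lexx pi_ge0.
have : 0 < sin (r - pi) by apply: sin_gt0_pi; rewrite subr_gt0 hrp /= ltrBlDr; lra.
have := sinDpi (r - pi); rewrite subrK hsr => h h3; lra.
Qed.

Definition e (t : R) : R[i] := Complex (cos t) (sin t).

Lemma eD a b : e a * e b = e (a + b).
Proof.
rewrite /e -[Complex _ _ * Complex _ _]/(Complex _ _) cosD sinD.
by congr Complex; rewrite addrC.
Qed.

Lemma e0 : e 0 = 1.
Proof. by rewrite /e cos0 sin0. Qed.

Lemma eX n t : e t ^+ n = e (n%:R * t).
Proof.
elim: n => [|n IH]; first by rewrite mul0r e0.
by rewrite exprS IH eD -[n.+1]addn1 natrD mulrDl mul1r addrC.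
Qed.

Lemma eNpi t : e (t + pi) = - e t.
Proof. by rewrite /e sinDpi cosDpi. Qed.

Lemma e_eq a b : e a = e b -> eq_mod2pi a b.
Proof.
move=> h.
have : e (a - b) = 1 by rewrite -eD h eD subrr e0.
case=> hc hs; have [m hm] := @trig1 _ hc hs.
by exists m.
Qed.

Lemma sumC (I : finType) (f : I -> R) :
  \sum_(j : I) Complex (f j) 0 = Complex (\sum_(j : I) f j) 0.
Proof.
apply: (big_rec2 (fun (x : R[i]) y => x = Complex y 0)) => // j x y _ ->.
by rewrite -[Complex _ _ + Complex _ _]/(Complex _ _) addr0.
Qed.

Variable k : nat.
Variable v : 'rV[R]_(k.*2).
Hypothesis k0 : (0 < k)%N.

Let N := (k.*2).-1.
Let nn (j : nat) := (j./2).*2.+1.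
Let a (j : 'I_(k.*2)) : R[i] :=
  if odd j then Complex 0 (- v 0 j) else Complex (v 0 j) 0.
Let b (j : 'I_(k.*2)) : R[i] :=
  if odd j then Complex 0 (v 0 j) else Complex (v 0 j) 0.
Definition PP : {poly R[i]} :=
  \sum_(j < k.*2) (a j *: 'X^(N + nn j) + b j *: 'X^(N - nn j)).

Lemma nn_le (j : 'I_(k.*2)) : (nn j <= N)%N.
Proof. have := ltn_ord j; rewrite /nn /N; lia. Qed.

Lemma hornerPP z :
  PP.[z] = \sum_(j < k.*2) (a j * z ^+ (N + nn j) + b j * z ^+ (N - nn j)).
Proof.
rewrite /PP horner_sum; apply: eq_bigr => j _.
by rewrite hornerD !hornerZ !hornerXn.
Qed.

Lemma hornerPPN z : PP.[- z] = PP.[z].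
Proof.
rewrite !hornerPP; apply: eq_bigr => j _.
have h1 : (N + nn j = (k.-1 + j./2 + 1).*2)%N.
  have := ltn_ord j; rewrite /nn /N; lia.
have h2 : (N - nn j = (k.-1 - j./2).*2)%N.
  have := ltn_ord j; rewrite /nn /N; lia.
have hz : forall m, (- z) ^+ (m.*2) = z ^+ (m.*2).
  by move=> m; rewrite -mul2n !exprM sqrrN.
by rewrite h1 h2 !hz.
Qed.

Lemma term_e (j : 'I_(k.*2)) t :
  a j * e t ^+ (N + nn j) + b j * e t ^+ (N - nn j) =
  e t ^+ N * Complex ((v 0 j * Uk k t 0 j) *+ 2) 0.
Proof.
have hN : e t ^+ (N - nn j) = e t ^+ N * e (- ((nn j)%:R * t)).
  by rewrite !eX eD natrB ?nn_le // mulrBl.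
rewrite exprD hN [e t ^+ nn j]eX.
rewrite [a j * _]mulrCA [b j * _]mulrCA -mulrDr; congr (_ * _).
rewrite /a /b /e mxE cosN sinN /nn.
case: (odd j).
  rewrite -[Complex _ _ * Complex _ _]/(Complex _ _).
  rewrite -[Complex _ _ * Complex _ _]/(Complex _ _).
  rewrite -[Complex _ _ + Complex _ _]/(Complex _ _).
  congr Complex; ring.
rewrite -[Complex _ _ * Complex _ _]/(Complex _ _).
rewrite -[Complex (v 0 j) 0 * Complex _ _]/(Complex _ _).
rewrite -[Complex _ _ + Complex _ _]/(Complex _ _).
congr Complex; ring.
Qed.

Lemma PP_e t : PP.[e t] =
  e t ^+ N * Complex ((\sum_(j < k.*2) v 0 j * Uk k t 0 j) *+ 2) 0.
Proof.
rewrite hornerPP (eq_bigr _ (fun j _ => term_e j t)) -mulr_sumr sumC.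
by rewrite -sumrMnl.
Qed.

Lemma size_PP : (size PP <= N + N + 1)%N.
Proof.
apply/leq_sizeP => d hd.
rewrite /PP coef_sum big1 // => j _.
rewrite coefD !coefZ !coefXn.
have := nn_le j => hj.
have -> : (d == N + nn j)%N = false by apply/eqP; lia.
have -> : (d == N - nn j)%N = false by apply/eqP; lia.
by rewrite !mulr0 addr0.
Qed.

Lemma PP0 : PP = 0 -> v = 0.
Proof.
move=> h0; apply/rowP => j0; rewrite mxE.
set m0 := j0./2.
have hje : (m0.*2 < k.*2)%N by have := ltn_ord j0; rewrite /m0; lia.
have hjo : (m0.*2.+1 < k.*2)%N by have := ltn_ord j0; rewrite /m0; lia.
pose je := Ordinal hje; pose jo := Ordinal hjo.
have : PP`_(N + nn j0) = 0 by rewrite h0 coef0.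
rewrite /PP coef_sum.
rewrite (eq_bigr (fun j => a j * (j0./2 == j./2)%N%:R)); last first.
  move=> j _; rewrite coefD !coefZ !coefXn.
  have := nn_le j => hj.
  have -> : (N + nn j0 == N - nn j)%N = false by apply/eqP; rewrite /nn; lia.
  rewrite mulr0 addr0; congr (_ * _%:R).
  apply/eqP/eqP; rewrite /nn; lia.
rewrite (bigD1 je) //=.
have hjoe : jo != je by rewrite -val_eqE /= neq_ltn ltnSn orbT.
rewrite (bigD1 jo) /=; last by rewrite hjoe.
rewrite big1; last first.
  move=> j /andP[hj1 hj2].
  case: eqP; last by rewrite mulr0.
  move=> hm; exfalso; move: hj1 hj2; rewrite -!val_eqE /=.
  have := odd_double_half j; rewrite -hm -/m0.
  by case: (odd j) => /= <-; rewrite eqxx // andbF.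
have -> : (j0./2 == je./2)%N by apply/eqP; rewrite /= /m0; lia.
have -> : (j0./2 == jo./2)%N by apply/eqP; rewrite /= /m0; lia.
rewrite /a /= odd_double /= !mulr1 addr0.
rewrite -[Complex _ _ + Complex _ _]/(Complex _ _) !addr0 add0r.
case=> h1 /eqP; rewrite oppr_eq0 => /eqP h2.
have := odd_double_half j0; rewrite -/m0.
case: (odd j0) => hj0.
  suff -> : j0 = jo by [].
  by apply/val_inj; rewrite /= -hj0 add1n.
suff -> : j0 = je by [].
by apply/val_inj; rewrite /= -hj0.
Qed.

End Aux.

Theorem lemma2p2 (R : realType) (k : nat) (t : 'I_(k.*2) -> R) :
  (0 < k)%N ->
  (forall i j : 'I_(k.*2), i != j -> ~ eq_mod2pi (t i) (t j)) ->
  (forall i j : 'I_(k.*2), ~ eq_mod2pi (t i) (t j + pi)) ->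
  row_free (Umat t).
Proof.
move=> k0 hd hpi.
rewrite row_free_unit unitmxE unitfE -det_tr.
apply/negP => /det0P [v v0 hv].
have hU : forall i, \sum_(j < k.*2) v 0 j * Uk k (t i) 0 j = 0.
  move=> i; have := congr1 (fun M : 'rV[R]_(k.*2) => M 0 i) hv; rewrite [X in X = _]mxE [X in _ = X]mxE => H; rewrite -[RHS]H.
  by apply: eq_bigr => j _; rewrite !mxE.
have hr : forall i, (PP R k v).[e R (t i)] = 0.
  by move=> i; rewrite (PP_e _ _ _ k0) hU mul0rn mulr0.
have hrN : forall i, (PP R k v).[- e R (t i)] = 0.
  by move=> i; rewrite (hornerPPN _ _ _ k0) hr.
pose rs := map (fun i => e R (t i)) (enum 'I_(k.*2)) ++
           map (fun i => - e R (t i)) (enum 'I_(k.*2)).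
have PPn0 : PP R k v != 0.
  by apply: contra v0 => /eqP /(@PP0 _ _ _ k0) ->.
have := max_poly_roots PPn0.
move=> /(_ rs) H.
have hsz : size rs = (k.*2 + k.*2)%N.
  by rewrite /rs size_cat !size_map -enumT size_enum_ord.
suff : (size rs < size (PP R k v))%N.
  have := size_PP _ _ v k0; rewrite hsz; lia.
apply: H.
  rewrite all_cat !all_map; apply/andP; split; apply/allP => i _ /=;
  by rewrite /root ?hr ?hrN.
have einj : injective (fun i => e R (t i)).
  move=> i j /= hij; apply/eqP; apply: contraT => nij.
  by case: (hd _ _ nij (@e_eq _ _ _ hij)).
rewrite cat_uniq !map_inj_uniq -?enumT ?enum_uniq //= ?andbT; last first.
  by move=> i j /= /oppr_inj /einj.
apply/hasPn => x /mapP [i _ ->]; apply/negP => /mapP [j _ hj].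
apply: (hpi j i); apply: (@e_eq R).
by rewrite eNpi -hj.
Qed.
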